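(* Let $\Upsilon_{0:k}$ be the Choi operator of a valid $k$-slot process tensor on $n$ qubits, and let $\Upsilon^{\mathcal{T}_P}_{0:k}:=\mathcal{T}_P^{(k)}(\Upsilon_{0:k})$ be its multi-time Pauli twirl. Then $\Upsilon^{\mathcal{T}_P}_{0:k}$ admits the process-separable decomposition \[ \Upsilon^{\mathcal{T}_P}_{0:k}=\sum_{\mathcal{P}\in\mathbb{P}^{(n,k)}}\Pr(\mathcal{P})\,\Upsilon_{\mathcal{P}},\qquad \Upsilon_{\mathcal{P}}=\bigotimes_{j=0}^k\Pi_{P_j}, \] where, for a trajectory $\mathcal{P}=(P_0,\dots,P_k)$, \[ \Pr(\mathcal{P})=\frac{w(\mathcal{P})}{\mathcal{N}},\qquad w(\mathcal{P}):=\mathrm{Tr}\Big[\Big(\bigotimes_{j=0}^k\Pi_{P_j}\Big)\Upsilon_{0:k}\Big]\ge 0,\qquad \mathcal{N}:=\sum_{\mathcal{P}\in\mathbb{P}^{(n,k)}}w(\mathcal{P}), \] and the numbers $\Pr(\mathcal{P})$ form a valid probability distribution on $\mathbb{P}^{(n,k)}$.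
   Context: $\mathbb{P}^{(n)}=\{I,X,Y,Z\}^{\otimes n}$ is the set of $n$-qubit Pauli operators (modulo phase), and $\mathbb{P}^{(n,k)}=(\mathbb{P}^{(n)})^{k+1}$ is the set of spatiotemporal Pauli trajectories $\mathcal{P}=(P_0,\dots,P_k)$. For $P\in\mathbb{P}^{(n)}$, $|P\rangle\!\rangle=(\mathbb{I}\otimes P)\sum_i|i\rangle|i\rangle$ is its vectorisation and $\Pi_P=|P\rangle\!\rangle\langle\!\langle P|$ (the Choi operator of the channel $\rho\mapsto P\rho P$), acting on $\mathcal{H}_{\mathfrak{i}_j}\otimes\mathcal{H}_{\mathfrak{o}_j}$ in the $j$-th factor. A $k$-slot process tensor has Choi operator $\Upsilon_{0:k}$ on $\bigotimes_{j=0}^k(\mathcal{H}_{\mathfrak{i}_j}\otimes\mathcal{H}_{\mathfrak{o}_j})$ (each factor an $n$-qubit space, $\mathfrak{i}_j,\mathfrak{o}_j$ the input/output at time step $j$); it is valid iff $\Upsilon_{0:k}\ge0$ and there are operators $\Upsilon_{0:j}$ on the first $j+1$ slots ($\Upsilon_{0:k}$ the given one) with $\mathrm{Tr}_{\mathfrak{o}_j}[\Upsilon_{0:j}]=\Upsilon_{0:j-1}\otimes\mathbb{I}_{\mathfrak{i}_j}$ for $j=1,\dots,k$ and $\mathrm{Tr}_{\mathfrak{o}_0}[\Upsilon_{0:0}]=\mathbb{I}_{\mathfrak{i}_0}$ (Choi operators use the unnormalised maximally entangled vector). The multi-time Pauli twirl is $\mathcal{T}_P^{(k)}(\Upsilon)=|\mathbb{P}^{(n)}|^{-(k+1)}\sum_{P_0,\dots,P_k\in\mathbb{P}^{(n)}}(\bigotimes_{j}P_j\otimes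 P_j)\Upsilon(\bigotimes_j P_j\otimes P_j)$, the $j$-th pair acting on $\mathcal{H}_{\mathfrak{i}_j}\otimes\mathcal{H}_{\mathfrak{o}_j}$. An operator is process-separable if it is a convex combination of tensor products $\Upsilon_0\otimes\cdots\otimes\Upsilon_k$ of Choi operators of CPTP channels (one per time step). *)

(* Defs.v *)
(* Complex numbers: algC. Operators on a finite-dimensional
   Hilbert space with orthonormal basis indexed by a finType T are
   represented by their matrix entries T -> T -> algC. *)
From HB Require Import structures.
From mathcomp Require Import all_boot all_order all_algebra all_field.
Set Implicit Arguments. Unset Strict Implicit. Unset Printing Implicit Defensive.
Import Order.TTheory GRing.Theory Num.Theory.
Local Open Scope ring_scope.

Definition Op (T : finType) := T -> T -> algC.

Definition psd (T : finType) (A : Op T) : Prop :=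
  forall v : T -> algC, 0 <= \sum_(x : T) \sum_(y : T) (v x)^* * A x y * v y.

Definition trace (T : finType) (A : Op T) : algC := \sum_(x : T) A x x.

Definition mulop (T : finType) (A B : Op T) : Op T :=
  fun x y => \sum_(z : T) A x z * B z y.

Definition qbasis (n : nat) := {ffun 'I_n -> bool}.

(* n-qubit Pauli operators modulo phase: each qubit gets 0=I,1=X,2=Y,3=Z *)
Definition pauli (n : nat) := {ffun 'I_n -> 'I_4}.

(* single-qubit Pauli matrices, basis false=|0>, true=|1> *)
Definition sigma1 (a : 'I_4) (x y : bool) : algC :=
  match val a with
  | 0 => (x == y)%:R
  | 1 => (x != y)%:R
  | 2 => if x == y then 0 else if x then 'i else - 'i
  | _ => if x == y then (if x then -1 else 1) else 0
  end.

Definition pauli_op (n : nat) (P : pauli n) : Op (qbasis n) :=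
  fun x y => \prod_(q < n) sigma1 (P q) (x q) (y q).

(* basis of H_{i_j} (x) H_{o_j} : (input index, output index) *)
Definition slot (n : nat) := (qbasis n * qbasis n)%type.

(* |P>> = (I (x) P) sum_i |i>|i>,  i.e. <<(a,b)|P>> = P_{b a} *)
Definition vecP (n : nat) (P : pauli n) (s : slot n) : algC :=
  pauli_op P s.2 s.1.

Definition PiP (n : nat) (P : pauli n) : Op (slot n) :=
  fun s t => vecP P s * (vecP P t)^*.

Definition hist (n m : nat) := {ffun 'I_m -> slot n}.

Definition tens (n m : nat) (A : 'I_m -> Op (slot n)) : Op (hist n m) :=
  fun x y => \prod_(j < m) A j (x j) (y j).

Definition traj (n k : nat) := {ffun 'I_k.+1 -> pauli n}.

Definition Ups_traj (n k : nat) (Ps : traj n k) : Op (hist n k.+1) :=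
  tens (fun j => PiP (Ps j)).

Definition PP (n : nat) (P : pauli n) : Op (slot n) :=
  fun s t => pauli_op P s.1 t.1 * pauli_op P s.2 t.2.

Definition twirl (n k : nat) (Y : Op (hist n k.+1)) : Op (hist n k.+1) :=
  fun x y => (#|pauli n|%:R : algC) ^- k.+1 *
    \sum_(Ps : traj n k)
      mulop (mulop (tens (fun j => PP (Ps j))) Y) (tens (fun j => PP (Ps j))) x y.

Definition weight (n k : nat) (Y : Op (hist n k.+1)) (Ps : traj n k) : algC :=
  trace (mulop (Ups_traj Ps) Y).

Definition normN (n k : nat) (Y : Op (hist n k.+1)) : algC :=
  \sum_(Ps : traj n k) weight Y Ps.

Definition prob (n k : nat) (Y : Op (hist n k.+1)) (Ps : traj n k) : algC :=
  weight Y Ps / normN Y.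

Definition ext (n m : nat) (x : hist n m) (s : slot n) : hist n m.+1 :=
  [ffun i => if unlift ord_max i is Some i' then x i' else s].

(* valid k-slot process tensor: Upsilon >= 0 and a chain Upsilon_{0:j}
   (here U (j+1), an operator on the first j+1 slots) with
   Tr_{o_j} U(j+1) = U j (x) I_{i_j}, where U 0 := 1 (scalar), so that the
   case j = 0 reads Tr_{o_0} Upsilon_{0:0} = I_{i_0}. *)
Definition valid_process_tensor (n k : nat) (Y : Op (hist n k.+1)) : Prop :=
  psd Y /\
  exists U : forall m : nat, Op (hist n m),
    (forall x y, U k.+1 x y = Y x y) /\
    (forall x y, U 0%N x y = 1) /\
    (forall m : nat, (m < k.+1)%N ->
       forall (x y : hist n m) (a b : qbasis n),
         \sum_(o : qbasis n) U m.+1 (ext x (a, o)) (ext y (b, o))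
           = U m x y * (a == b)%:R).

Definition cptp_choi (n : nat) (C : Op (slot n)) : Prop :=
  psd C /\ forall a b : qbasis n, \sum_(o : qbasis n) C (a, o) (b, o) = (a == b)%:R.

Definition process_separable (n k : nat) (Y : Op (hist n k.+1)) : Prop :=
  exists (I : finType) (p : I -> algC) (C : I -> 'I_k.+1 -> Op (slot n)),
    (forall i, 0 <= p i) /\ \sum_(i : I) p i = 1 /\
    (forall i j, cptp_choi (C i j)) /\
    (forall x y, Y x y = \sum_(i : I) p i * tens (C i) x y).

(* Main.v *)
Require Import Defs.
From HB Require Import structures.
From mathcomp Require Import all_boot all_order all_algebra all_field.
From mathcomp Require Import ring.
Import Order.TTheory GRing.Theory Num.Theory.
Local Open Scope ring_scope.

Definition gauss := (int * int)%type.
Definition phi (g : gauss) : algC := g.1%:~R + g.2%:~R * 'i.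
Definition gmul (g h : gauss) : gauss := (g.1*h.1 - g.2*h.2, g.1*h.2 + g.2*h.1).
Definition gadd (g h : gauss) : gauss := (g.1+h.1, g.2+h.2).
Definition gconj (g : gauss) : gauss := (g.1, - g.2).

Lemma phi_mul g h : phi g * phi h = phi (gmul g h).
Proof.
rewrite /phi /gmul /=.
have e : 'i * 'i = -1 :> algC by rewrite -expr2 sqrCi.
rewrite !rmorphB !rmorphD !rmorphM /=.
transitivity ((g.1%:~R * h.1%:~R) + (g.1%:~R * h.2%:~R + g.2%:~R * h.1%:~R) * 'i
   + (g.2%:~R * h.2%:~R) * ('i * 'i) : algC); first by ring.
rewrite e; ring.
Qed.
Lemma phi_add g h : phi g + phi h = phi (gadd g h).
Proof. rewrite /phi /gadd /= !rmorphD /=; ring. Qed.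
Lemma phi_conj g : (phi g)^* = phi (gconj g).
Proof. rewrite /phi /gconj /= rmorphD rmorphM /= !rmorph_int conjCi rmorphN /=; ring. Qed.
Lemma phi0 : phi (0,0) = 0.
Proof. by rewrite /phi /= mul0r addr0. Qed.

Definition gs (a : 'I_4) (x y : bool) : gauss :=
  match val a with
  | 0 => ((x == y)%:Z, 0)
  | 1 => ((x != y)%:Z, 0)
  | 2 => if x == y then (0,0) else if x then (0,1) else (0,-1)
  | _ => if x == y then (if x then (-1,0) else (1,0)) else (0,0)
  end.

Lemma sigmaE a x y : sigma1 a x y = phi (gs a x y).
Proof.
rewrite /sigma1 /gs /phi.
case: a => [[|[|[|[|m]]]] Hm] //=; case: x; case: y => //=;
  rewrite ?mul0r ?mul1r ?addr0 ?add0r ?mulN1r //.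
Qed.
Lemma phi_sum (F : 'I_4 -> gauss) : \sum_(a < 4) phi (F a) = phi (\big[gadd/(0,0)]_(a < 4) F a).
Proof. by rewrite (big_morph phi (fun g h => esym (phi_add g h)) phi0). Qed.

Lemma phi_nat (m : nat) : phi (m%:Z, 0) = m%:R.
Proof. by rewrite /phi /= mul0r addr0. Qed.

Lemma Q1 s1 s2 t1 t2 u1 u2 v1 v2 :
  \sum_(a < 4) ((sigma1 a s1 t1 * sigma1 a s2 t2) * (sigma1 a u1 v1 * sigma1 a u2 v2))
  = \sum_(a < 4) ((sigma1 a u2 u1 * (sigma1 a t2 t1)^*) * (sigma1 a s2 s1 * (sigma1 a v2 v1)^*)).
Proof.
under eq_bigr do rewrite !sigmaE !phi_mul.
under [RHS]eq_bigr do rewrite !sigmaE !phi_conj !phi_mul.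
rewrite !phi_sum; congr phi.
move: s1 s2 t1 t2 u1 u2 v1 v2.
move=> s1 s2 t1 t2 u1 u2 v1 v2; rewrite !big_ord_recl !big_ord0.
case: s1; case: s2; case: t1; case: t2; case: u1; case: u2; case: v1; case: v2; vm_compute; reflexivity.
Qed.

Lemma Q2 (a : 'I_4) x y : \sum_(o : bool) sigma1 a o x * (sigma1 a o y)^* = (x == y)%:R.
Proof.
rewrite big_bool /= !sigmaE !phi_conj !phi_mul phi_add -phi_nat; congr phi.
case: a => [[|[|[|[|m]]]] Hm] //; case: x; case: y; vm_compute; reflexivity.
Qed.

Lemma Q3 s1 s2 t1 t2 : \sum_(a < 4) (sigma1 a s2 s1 * (sigma1 a t2 t1)^*)
   = (2 * ((s1 == t1) && (s2 == t2)))%:R.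
Proof.
under eq_bigr do rewrite !sigmaE !phi_conj !phi_mul.
rewrite phi_sum -phi_nat; congr phi.
rewrite !big_ord_recl !big_ord0.
case: s1; case: s2; case: t1; case: t2; vm_compute; reflexivity.
Qed.

Lemma sum_prod_ffun (I J : finType) (F : I -> J -> algC) :
  \sum_(f : {ffun I -> J}) \prod_i F i (f i) = \prod_i \sum_j F i j.
Proof. by rewrite bigA_distr_bigA. Qed.

Lemma prod_nat_bool (I : finType) (c : I -> bool) :
  \prod_i (c i)%:R = ([forall i, c i])%:R :> algC.
Proof.
case: forallP => H.
  by rewrite big1 // => i _; rewrite H.
have [i Hi] : exists i, ~~ c i.
  by apply/forallPn; apply/negP => /forallP.
by rewrite (bigD1 i) //= (negbTE Hi) mul0r.
Qed.

Lemma forall_ffun_eq (I T : finType) (f g : {ffun I -> T}) :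
  [forall i, f i == g i] = (f == g).
Proof.
apply/forallP/eqP => [H|-> i //]; apply/ffunP => i; exact/eqP.
Qed.
Lemma Lslot n (s t u v : slot n) :
  \sum_(P : pauli n) PP P s t * PP P u v = \sum_(P : pauli n) PiP P u t * PiP P s v.
Proof.
rewrite /PP /PiP /vecP /pauli_op.
under eq_bigr do rewrite -!big_split /=.
under [RHS]eq_bigr do rewrite !rmorph_prod -!big_split /=.
rewrite (sum_prod_ffun _ _ (fun q (a : 'I_4) => sigma1 a (s.1 q) (t.1 q) * sigma1 a (s.2 q) (t.2 q) *
         (sigma1 a (u.1 q) (v.1 q) * sigma1 a (u.2 q) (v.2 q)))).
rewrite (sum_prod_ffun _ _ (fun q (a : 'I_4) => sigma1 a (u.2 q) (u.1 q) * (sigma1 a (t.2 q) (t.1 q))^* *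
         (sigma1 a (s.2 q) (s.1 q) * (sigma1 a (v.2 q) (v.1 q))^*))).
apply: eq_bigr => q _; exact: Q1.
Qed.

Lemma Ltraj n k (x z w y : hist n k.+1) :
  \sum_(Ps : traj n k) tens (fun j => PP (Ps j)) x z * tens (fun j => PP (Ps j)) w y
  = \sum_(Ps : traj n k) Ups_traj Ps w z * Ups_traj Ps x y.
Proof.
rewrite /Ups_traj /tens.
under eq_bigr do rewrite -!big_split /=.
under [RHS]eq_bigr do rewrite -!big_split /=.
rewrite (sum_prod_ffun _ _ (fun j (P : pauli n) => PP P (x j) (z j) * PP P (w j) (y j))).
rewrite (sum_prod_ffun _ _ (fun j (P : pauli n) => PiP P (w j) (z j) * PiP P (x j) (y j))).
apply: eq_bigr => j _; exact: Lslot.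
Qed.

Lemma twirl_eq n k (Y : Op (hist n k.+1)) x y :
  twirl Y x y = (#|pauli n|%:R : algC) ^- k.+1 *
     \sum_(Ps : traj n k) weight Y Ps * Ups_traj Ps x y.
Proof.
rewrite /twirl /weight /trace /mulop; congr (_ * _).
under eq_bigr do under eq_bigr do rewrite mulr_suml.
under [RHS]eq_bigr do rewrite mulr_suml.
under [RHS]eq_bigr do under eq_bigr do rewrite mulr_suml.
rewrite exchange_big [RHS]exchange_big; apply: eq_bigr => w _.
rewrite exchange_big [RHS]exchange_big; apply: eq_bigr => z _.
rewrite (eq_bigr (fun Ps : traj n k => Y z w * (tens (fun j => PP (Ps j)) x z * tens (fun j => PP (Ps j)) w y))); last first.
  by move=> Ps _; rewrite mulrCA mulrA.
rewrite [RHS](eq_bigr (fun Ps : traj n k => Y z w * (Ups_traj Ps w z * Ups_traj Ps x y))); last first.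
  by move=> Ps _; rewrite mulrCA -mulrA mulrCA.
by rewrite -!mulr_sumr Ltraj.
Qed.

Lemma slot_forall n (s t : slot n) :
  [forall q, (s.1 q == t.1 q) && (s.2 q == t.2 q)] = (s == t).
Proof.
apply/forallP/eqP => [H | -> q]; last by rewrite !eqxx.
case: s t H => [s1 s2] [t1 t2] H /=; congr pair; apply/ffunP => q;
  by case/andP: (H q) => /eqP ? /eqP ?.
Qed.

Lemma sumPiP n (s t : slot n) :
  \sum_(P : pauli n) PiP P s t = (2^n)%:R * (s == t)%:R.
Proof.
rewrite /PiP /vecP /pauli_op.
under eq_bigr do rewrite rmorph_prod -big_split /=.
rewrite (sum_prod_ffun _ _ (fun q (a : 'I_4) => sigma1 a (s.2 q) (s.1 q) * (sigma1 a (t.2 q) (t.1 q))^*)).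
under eq_bigr do rewrite Q3 natrM.
by rewrite big_split /= prodr_const card_ord prod_nat_bool slot_forall natrX.
Qed.

Lemma sumUps n k (w z : hist n k.+1) :
  \sum_(Ps : traj n k) Ups_traj Ps w z = ((2^n)%:R)^+k.+1 * (w == z)%:R.
Proof.
rewrite /Ups_traj /tens (sum_prod_ffun _ _ (fun j (P : pauli n) => PiP P (w j) (z j))).
under eq_bigr do rewrite sumPiP.
by rewrite big_split /= prodr_const card_ord prod_nat_bool forall_ffun_eq.
Qed.

Lemma card_qbasis n : #|qbasis n| = (2^n)%N.
Proof. by rewrite card_ffun card_bool card_ord. Qed.

Lemma card_pauli n : #|pauli n| = (4^n)%N.
Proof. by rewrite card_ffun !card_ord. Qed.

Lemma sum_hist n m (F : hist n m.+1 -> algC) :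
  \sum_x F x = \sum_(x' : hist n m) \sum_(a : qbasis n) \sum_(o : qbasis n) F (ext x' (a, o)).
Proof.
rewrite (reindex (fun p : hist n m * slot n => ext p.1 p.2)) /=; last first.
  exists (fun x : hist n m.+1 => ([ffun i => x (widen_ord (leqnSn m) i)], x ord_max)).
  - move=> [x' s] _ /=; congr pair.
      apply/ffunP => i; rewrite !ffunE.
      have -> : widen_ord (leqnSn m) i = lift ord_max i by apply: ord_inj; rewrite lift_max.
      by rewrite liftK.
    by rewrite ffunE unlift_none.
  - move=> x _; apply/ffunP => i; rewrite ffunE /=.
    case: unliftP => [j ->|->] //; rewrite ffunE; congr (x _).
    by apply: ord_inj; rewrite lift_max.
rewrite -(pair_bigA _ (fun (x' : hist n m) (s : slot n) => F (ext x' s))) /=.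
apply: eq_bigr => x' _.
rewrite (pair_bigA _ (fun (a o : qbasis n) => F (ext x' (a, o)))) /=.
by apply: eq_bigr => -[a o].
Qed.

Lemma trace_U n k (U : forall m : nat, Op (hist n m)) :
  (forall x y, U 0%N x y = 1) ->
  (forall m : nat, (m < k.+1)%N ->
       forall (x y : hist n m) (a b : qbasis n),
         \sum_(o : qbasis n) U m.+1 (ext x (a, o)) (ext y (b, o))
           = U m x y * (a == b)%:R) ->
  forall m, (m <= k.+1)%N -> trace (U m) = ((2^n)%:R)^+m.
Proof.
move=> H0 Hc; elim=> [_|m IH Hm].
  rewrite /trace; under eq_bigr do rewrite H0.
  by rewrite sumr_const card_ffun card_ord expn0 expr0.
rewrite /trace sum_hist.
under eq_bigr do under eq_bigr do rewrite Hc // eqxx mulr1.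
under eq_bigr do rewrite sumr_const card_qbasis.
rewrite sumrMnl; change (trace (U m) *+ 2^n = (2 ^ n)%:R ^+ m.+1).
by rewrite IH ?(ltnW Hm) // exprS mulr_natl.
Qed.

Lemma normN_eq n k (Y : Op (hist n k.+1)) :
  normN Y = ((2^n)%:R)^+k.+1 * trace Y.
Proof.
rewrite /normN /weight /trace /mulop.
rewrite exchange_big mulr_sumr; apply: eq_bigr => a _.
rewrite exchange_big.
under eq_bigr do rewrite -mulr_suml sumUps.
rewrite (bigD1 a) //= eqxx mulr1 big1 ?addr0 // => b Hb.
by rewrite eq_sym (negbTE Hb) mulr0 mul0r.
Qed.

Lemma weight_ge0 n k (Y : Op (hist n k.+1)) (Ps : traj n k) :
  psd Y -> 0 <= weight Y Ps.
Proof.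
move=> HY.
set V := fun x : hist n k.+1 => \prod_(j < k.+1) vecP (Ps j) (x j).
have HU : forall a b, Ups_traj Ps a b = V a * (V b)^*.
  move=> a b; rewrite /Ups_traj /tens /PiP /V rmorph_prod -big_split /=.
  by apply: eq_bigr => j _; reflexivity.
suff -> : weight Y Ps = \sum_x \sum_y (V x)^* * Y x y * V y by exact: HY.
rewrite /weight /trace /mulop.
under eq_bigr do under eq_bigr do rewrite HU.
rewrite exchange_big /=; apply: eq_bigr => b _; apply: eq_bigr => a _.
by ring.
Qed.

Lemma PiP_cptp n (P : pauli n) : cptp_choi (PiP P).
Proof.
split.
  move=> v.
  set c := \sum_x (v x)^* * vecP P x.
  have -> : \sum_x \sum_y (v x)^* * PiP P x y * v y = c * c^*.
    rewrite /c rmorph_sum mulr_suml; apply: eq_bigr => x _.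
    rewrite mulr_sumr; apply: eq_bigr => y _.
    rewrite /PiP rmorphM /= conjCK; ring.
  by rewrite -normCK exprn_ge0.
move=> a b.
rewrite /PiP /vecP /pauli_op /=.
under eq_bigr do rewrite rmorph_prod -big_split /=.
rewrite (sum_prod_ffun _ _ (fun q (o : bool) => sigma1 (P q) o (a q) * (sigma1 (P q) o (b q))^*)).
under eq_bigr do rewrite Q2.
by rewrite prod_nat_bool forall_ffun_eq.
Qed.

Theorem theorem1 (n k : nat) (Y : Op (hist n k.+1)) :
  valid_process_tensor Y ->
  (forall Ps : traj n k, 0 <= weight Y Ps) /\
  (forall x y, twirl Y x y = \sum_(Ps : traj n k) prob Y Ps * Ups_traj Ps x y) /\
  (forall Ps : traj n k, 0 <= prob Y Ps) /\
  \sum_(Ps : traj n k) prob Y Ps = 1 /\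
  (forall Ps : traj n k, forall j : 'I_k.+1, cptp_choi (PiP (Ps j))) /\
  process_separable (twirl Y).
Proof.
move=> [HY [U [HUY [HU0 HUc]]]].
have trY : trace Y = ((2^n)%:R)^+k.+1.
  have := trace_U _ _ _ HU0 HUc k.+1 (leqnn _).
  rewrite /trace; under eq_bigr do rewrite HUY; by [].
have HN : normN Y = (#|pauli n|%:R)^+k.+1.
  by rewrite normN_eq trY card_pauli -exprMn -natrM -expnMn.
have Npos : 0 < normN Y by rewrite HN exprn_gt0 // ltr0n card_pauli expn_gt0.
have N0 : normN Y != 0 by rewrite (gt_eqF Npos).
have Hw : forall Ps, 0 <= weight Y Ps by move=> Ps; exact: weight_ge0.
have Hp : forall Ps, 0 <= prob Y Ps by move=> Ps; rewrite /prob divr_ge0 // ltW.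
have Hs : \sum_(Ps : traj n k) prob Y Ps = 1.
  by rewrite /prob -mulr_suml -/(normN Y) divff.
have Ht : forall x y, twirl Y x y = \sum_(Ps : traj n k) prob Y Ps * Ups_traj Ps x y.
  move=> x y; rewrite twirl_eq -HN mulr_sumr; apply: eq_bigr => Ps _.
  by rewrite /prob mulrCA mulrA.
have Hc : forall Ps : traj n k, forall j : 'I_k.+1, cptp_choi (PiP (Ps j)).
  by move=> Ps j; exact: PiP_cptp.
do 5! (split => //).
by exists (traj n k), (prob Y), (fun (Ps : traj n k) (j : 'I_k.+1) => PiP (Ps j)).
Qed.
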